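(* (i) Let $x\in[0,1]$ admit an infinite OOCF expansion $((a_n,\varepsilon_n))_{n\ge1}$ that is eventually periodic. Then $x$ is either an $\infty$-rational or a quadratic irrational. (ii) If $x\in(0,1)$ is a quadratic irrational, then its OOCF expansion is eventually periodic.
   Context: Rationals are written $p/q$ with $p\in\mathbb Z$, $q\in\mathbb N$, $\gcd(p,q)=1$; $p/q$ is an $\infty$-rational if $p$ and $q$ have different parity (e.g. $0=0/1$). A quadratic irrational is an irrational real root of a quadratic polynomial with integer coefficients. Admissible digits: $D=\{(1,1)\}\cup\{(a,\varepsilon): a\in\mathbb Z,\ a\ge2,\ \varepsilon\in\{-1,1\}\}$. For integers $k\ge1$ put $B(k+1,-1)=\left[\frac{k-1}{k},\frac{2k-1}{2k+1}\right]$ and $B(k,1)=\left[\frac{2k-1}{2k+1},\frac{k}{k+1}\right]$. The OOCF map $T:[0,1]\to[0,1]$ is $T(x)=\frac{kx-(k-1)}{k-(k+1)x}$ for $x\in B(k+1,-1)$, $T(x)=\frac{k-(k+1)x}{kx-(k-1)}$ for $x\in B(k,1)$ ($k\ge1$; the formulas agree at common endpoints), and $T(1)=1$. An infinite OOCF expansion of $x\in[0,1]$ is a sequence $((a_n,\varepsilon_n))_{n\ge1}$ in $D$ with $T^{n-1}(x)\in B(a_n,\varepsilon_n)$ and $T^{n-1}(x)\neq1$ for all $n\ge1$; an irrational $x\in(0,1)$ has exactly one, called its OOCF expansion. *)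

(* Defs.v *)
From Stdlib Require Import Reals Lra ZArith.
Open Scope R_scope.

Definition admissible (d : Z * Z) : Prop :=
  let (a, e) := d in
  (a = 1%Z /\ e = 1%Z) \/ ((2 <= a)%Z /\ (e = (-1)%Z \/ e = 1%Z)).

Definition inB (d : Z * Z) (y : R) : Prop :=
  let (a, e) := d in
  (e = (-1)%Z /\ (2 <= a)%Z /\
     let k := IZR (a - 1) in (k - 1) / k <= y <= (2 * k - 1) / (2 * k + 1))
  \/
  (e = 1%Z /\ (1 <= a)%Z /\
     let k := IZR a in (2 * k - 1) / (2 * k + 1) <= y <= k / (k + 1)).

(* For x in [0,1), the unique k >= 1 with
   x ∈ [(k-1)/k, k/(k+1)) = B(k+1,-1) ∪ B(k,1) is k = floor(1/(1-x));
   at the common endpoint (2k-1)/(2k+1) both formulas agree (value 1).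
   Values outside [0,1] are irrelevant. *)
Definition oocf_T (x : R) : R :=
  if Req_EM_T x 1 then 1 else
  let k := IZR (Int_part (/ (1 - x))) in
  if Rle_dec x ((2 * k - 1) / (2 * k + 1))
  then (k * x - (k - 1)) / (k - (k + 1) * x)
  else (k - (k + 1) * x) / (k * x - (k - 1)).

(* s is an infinite OOCF expansion of x (indexed from 0: s n = (a_{n+1}, ε_{n+1})). *)
Definition is_oocf_expansion (x : R) (s : nat -> Z * Z) : Prop :=
  forall n : nat,
    admissible (s n) /\ inB (s n) (Nat.iter n oocf_T x) /\ Nat.iter n oocf_T x <> 1.

Definition eventually_periodic {A : Type} (s : nat -> A) : Prop :=
  exists N p : nat, (0 < p)%nat /\ forall n : nat, (N <= n)%nat -> s (n + p)%nat = s n.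

Definition inf_rational (x : R) : Prop :=
  exists p q : Z, (0 < q)%Z /\ Z.gcd p q = 1%Z /\ Z.odd p <> Z.odd q /\ x = IZR p / IZR q.

Definition irrational (x : R) : Prop :=
  forall p q : Z, q <> 0%Z -> x <> IZR p / IZR q.

Definition quadratic_irrational (x : R) : Prop :=
  irrational x /\
  exists a b c : Z, a <> 0%Z /\ IZR a * x ^ 2 + IZR b * x + IZR c = 0.

(* Main.v *)
Require Import Defs.
From Stdlib Require Import Reals ZArith Lra Lia Psatz List FinFun ClassicalEpsilon.
Open Scope R_scope.

Lemma ldiv (a b c:R): 0<c -> (a/c <= b <-> a <= b*c).
Proof. intros Hc. split; intro H.
 - replace a with ((a/c)*c) by (field; lra). apply Rmult_le_compat_r; lra.
 - apply Rmult_le_reg_r with c; auto. replace (a/c*c) with a by (field;lra). lra.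
Qed.
Lemma rdiv (a b c:R): 0<c -> (b <= a/c <-> b*c <= a).
Proof. intros Hc. split; intro H.
 - replace a with ((a/c)*c) by (field; lra). apply Rmult_le_compat_r; lra.
 - apply Rmult_le_reg_r with c; auto. replace (a/c*c) with a by (field;lra). lra.
Qed.
Lemma ldivs (a b c:R): 0<c -> (a/c < b <-> a < b*c).
Proof. intros Hc. split; intro H.
 - replace a with ((a/c)*c) by (field; lra). apply Rmult_lt_compat_r; lra.
 - apply Rmult_lt_reg_r with c; auto. replace (a/c*c) with a by (field;lra). lra.
Qed.
Lemma rdivs (a b c:R): 0<c -> (b < a/c <-> b*c < a).
Proof. intros Hc. split; intro H.
 - replace a with ((a/c)*c) by (field; lra). apply Rmult_lt_compat_r; lra.
 - apply Rmult_lt_reg_r with c; auto. replace (a/c*c) with a by (field;lra). lra.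
Qed.

Lemma IP_eq (k:Z) (u:R): IZR k <= u -> u < IZR k + 1 -> Int_part u = k.
Proof. intros H1 H2. unfold Int_part. rewrite <- (up_tech u k); [ring|lra|rewrite plus_IZR; lra]. Qed.

Lemma B1 (k y : R): 1 <= k -> (k-1)/k <= y -> y <= (2*k-1)/(2*k+1) ->
  let t := (k*y - (k-1))/(k - (k+1)*y) in
  0 <= t <= 1 /\ y = (k*t + (k-1))/((k+1)*t + k).
Proof.
  intros Hk H1 H2 t.
  apply ldiv in H1; [|lra]. apply rdiv in H2; [|lra].
  assert (Hd: 0 < k - (k+1)*y) by nra.
  split.
  - unfold t; split.
    + apply rdiv; [lra|]. nra.
    + apply ldiv; [lra|]. nra.
  - assert (E: (k+1)*t + k = 1/(k-(k+1)*y)) by (unfold t; field; lra).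
    rewrite E. unfold t. field. lra.
Qed.

Lemma B2 (k y : R): 1 <= k -> (2*k-1)/(2*k+1) <= y -> y <= k/(k+1) ->
  let t := (k - (k+1)*y)/(k*y - (k-1)) in
  0 <= t <= 1 /\ y = ((k-1)*t + k)/(k*t + (k+1)).
Proof.
  intros Hk H1 H2 t.
  apply ldiv in H1; [|lra]. apply rdiv in H2; [|lra].
  assert (Hd: 0 < k*y - (k-1)) by nra.
  split.
  - unfold t; split.
    + apply rdiv; [lra|]. nra.
    + apply ldiv; [lra|]. nra.
  - assert (E: k*t + (k+1) = 1/(k*y-(k-1))) by (unfold t; field; lra).
    rewrite E. unfold t. field. lra.
Qed.

Record mat := Mat {m11:Z; m12:Z; m21:Z; m22:Z}.
Definition mob (M:mat) (t:R) : R :=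
  (IZR (m11 M) * t + IZR (m12 M)) / (IZR (m21 M) * t + IZR (m22 M)).
Definition Gd (d:Z*Z) : mat := let (a,e) := d in
  if Z.eqb e (-1) then Mat (a-1) (a-2) a (a-1) else Mat (a-1) a a (a+1).

Lemma inv_div u: / u = 1 / u. Proof. unfold Rdiv. ring. Qed.

Lemma B (d:Z*Z) (y:R): inB d y -> 0 <= oocf_T y <= 1 /\ y = mob (Gd d) (oocf_T y).
Proof.
  destruct d as [a e]. unfold inB. cbv zeta.
  intros [[He [Ha [H1 H2]]] | [He [Ha [H1 H2]]]]; subst e.
  - replace (Gd (a,-1)%Z) with (Mat (a-1) (a-2) a (a-1)) by reflexivity.
    assert (Ea: IZR (a-2) = IZR (a-1) - 1) by (rewrite !minus_IZR; ring).
    assert (Eb: IZR a = IZR (a-1) + 1) by (rewrite !minus_IZR; ring).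
    set (K := IZR (a-1)) in *.
    assert (HK: 1 <= K) by (unfold K; apply IZR_le; lia).
    pose proof (B1 K y HK H1 H2) as HB. cbv zeta in HB.
    apply ldiv in H1; [|lra]. apply rdiv in H2; [|lra].
    assert (Hy: y < 1) by nra.
    assert (Hip: Int_part (/ (1 - y)) = (a-1)%Z).
    { apply IP_eq; fold K; rewrite inv_div.
      - apply rdiv; nra.
      - apply ldivs; nra. }
    unfold oocf_T. destruct (Req_EM_T y 1) as [E|_]; [lra|]. cbv zeta.
    rewrite Hip. fold K.
    destruct (Rle_dec y ((2 * K - 1) / (2 * K + 1))) as [_|Hn].
    2:{ exfalso. apply Hn. apply rdiv; lra. }
    unfold mob; cbn [m11 m12 m21 m22]. rewrite Ea, Eb. fold K. exact HB.
  - replace (Gd (a,1)%Z) with (Mat (a-1) a a (a+1)) by reflexivity.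
    assert (Ea: IZR (a-1) = IZR a - 1) by (rewrite !minus_IZR; ring).
    assert (Eb: IZR (a+1) = IZR a + 1) by (rewrite !plus_IZR; ring).
    set (K := IZR a) in *.
    assert (HK: 1 <= K) by (unfold K; apply IZR_le; lia).
    pose proof (B2 K y HK H1 H2) as HB. cbv zeta in HB.
    apply ldiv in H1; [|lra]. apply rdiv in H2; [|lra].
    assert (Hy: y < 1) by nra.
    unfold oocf_T. destruct (Req_EM_T y 1) as [E|_]; [lra|]. cbv zeta.
    unfold mob; cbn [m11 m12 m21 m22]. rewrite Ea, Eb.
    destruct (Rle_lt_or_eq_dec _ _ H2) as [H2'|H2'].
    + assert (Hip: Int_part (/ (1 - y)) = a).
      { apply IP_eq; fold K; rewrite inv_div.
        - apply rdiv; nra.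
        - apply ldivs; nra. }
      rewrite Hip. fold K.
      destruct (Rle_dec y ((2 * K - 1) / (2 * K + 1))) as [Hl|Hn].
      * apply rdiv in Hl; [|lra].
        assert (Ey: y = (2*K-1)/(2*K+1)) by (apply Rle_antisym; [apply rdiv|apply ldiv]; lra).
        assert (Et: (K * y - (K - 1)) / (K - (K + 1) * y) = 1).
        { rewrite Ey. field. split; [|lra]. nra. }
        rewrite Et. split; [lra|]. rewrite Ey. field. lra.
      * exact HB.
    + assert (Ey: y = K/(K+1)) by (apply Rle_antisym; [apply rdiv|apply ldiv]; lra).
      assert (E1: / (1-y) = K+1) by (rewrite Ey; field; lra).
      assert (Hip: Int_part (/ (1 - y)) = (a+1)%Z).
      { apply IP_eq; rewrite E1, Eb; lra. }
      rewrite Hip, Eb. fold K.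
      assert (E0: (K+1)*y - (K+1-1) = 0) by (rewrite Ey; field; lra).
      assert (Et: forall u v : R, (if Rle_dec y u then ((K+1)*y - (K+1-1))/v else v/((K+1)*y - (K+1-1))) = 0).
      { intros u v. rewrite E0. destruct (Rle_dec y u); unfold Rdiv; [ring|rewrite Rinv_0; ring]. }
      rewrite Et. split; [lra|]. rewrite Ey. field. lra.
Qed.

Definition digit (y:R) : Z*Z := let k := Int_part (/(1-y)) in
  if Rle_dec y ((2*IZR k - 1)/(2*IZR k + 1)) then ((k+1)%Z, (-1)%Z) else (k, 1%Z).

Lemma irr_ne (y:R) p q: irrational y -> q<>0%Z -> y <> IZR p / IZR q.
Proof. intros H Hq. apply H; auto. Qed.

Lemma U (d:Z*Z) (y:R): inB d y -> irrational y -> d = digit y.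
Proof.
  destruct d as [a e]. unfold inB. cbv zeta.
  intros [[He [Ha [H1 H2]]] | [He [Ha [H1 H2]]]] Hirr; subst e.
  - set (K := IZR (a-1)) in *.
    assert (HK: 1 <= K) by (unfold K; apply IZR_le; lia).
    apply ldiv in H1; [|lra]. apply rdiv in H2; [|lra].
    assert (Hy: y < 1) by nra.
    assert (Hip: Int_part (/ (1 - y)) = (a-1)%Z).
    { apply IP_eq; fold K; rewrite inv_div.
      - apply rdiv; nra.
      - apply ldivs; nra. }
    unfold digit. cbv zeta. rewrite Hip. fold K.
    destruct (Rle_dec y ((2 * K - 1) / (2 * K + 1))) as [_|Hn].
    2:{ exfalso. apply Hn. apply rdiv; lra. }
    f_equal. ring.
  - set (K := IZR a) in *.
    assert (HK: 1 <= K) by (unfold K; apply IZR_le; lia).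
    assert (N1: y <> K/(K+1)).
    { unfold K. rewrite <- plus_IZR. apply irr_ne; auto; lia. }
    assert (N2: y <> (2*K-1)/(2*K+1)).
    { unfold K. replace (2*IZR a - 1) with (IZR (2*a-1)) by (rewrite minus_IZR, mult_IZR; ring).
      replace (2*IZR a + 1) with (IZR (2*a+1)) by (rewrite plus_IZR, mult_IZR; ring).
      apply irr_ne; auto; lia. }
    assert (H2': y < K/(K+1)) by lra.
    apply ldiv in H1; [|lra]. apply rdivs in H2'; [|lra].
    assert (Hy: y < 1) by nra.
    assert (Hip: Int_part (/ (1 - y)) = a).
    { apply IP_eq; fold K; rewrite inv_div.
      - apply rdiv; nra.
      - apply ldivs; nra. }
    unfold digit. cbv zeta. rewrite Hip. fold K.
    destruct (Rle_dec y ((2 * K - 1) / (2 * K + 1))) as [Hl|_]; [|reflexivity].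
    exfalso. apply N2. apply Rle_antisym; [lra|apply ldiv; lra].
Qed.

Lemma digit_ok (y:R): 0 < y < 1 -> admissible (digit y) /\ inB (digit y) y.
Proof.
  intros Hy. unfold digit. cbv zeta.
  set (k := Int_part (/(1-y))).
  destruct (base_Int_part (/(1-y))) as [Hb1 Hb2]. fold k in Hb1, Hb2.
  rewrite inv_div in Hb1, Hb2.
  assert (Hinv: 1 < 1/(1-y)) by (apply rdivs; lra).
  assert (Hk: (1 <= k)%Z).
  { assert (0 < IZR k) by lra. apply lt_IZR in H. lia. }
  assert (HK: 1 <= IZR k) by (apply IZR_le; lia).
  apply rdiv in Hb1; [|lra].
  assert (Hb3: 1/(1-y) < IZR k + 1) by lra.
  apply ldivs in Hb3; [|lra].
  destruct (Rle_dec y ((2 * IZR k - 1) / (2 * IZR k + 1))) as [Hl|Hn].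
  - split. { right. lia. }
    left. split; [reflexivity|]. split; [lia|].
    replace (k+1-1)%Z with k by ring.
    split; [apply ldiv; nra|exact Hl].
  - split. { destruct (Z.eq_dec k 1); [left; lia|right; lia]. }
    right. split; [reflexivity|]. split; [lia|].
    split; [lra|]. apply rdiv; nra.
Qed.

Definition mmul (M N:mat) := Mat (m11 M * m11 N + m12 M * m21 N) (m11 M * m12 N + m12 M * m22 N)
  (m21 M * m11 N + m22 M * m21 N) (m21 M * m12 N + m22 M * m22 N).
Definition mdet M := (m11 M * m22 M - m12 M * m21 M)%Z.
Definition Inv (M:mat) (m:nat) : Prop :=
  (0 <= m11 M)%Z /\ (0 <= m12 M)%Z /\ (0 <= m21 M)%Z /\ (1 <= m22 M)%Z /\
  (2 * Z.of_nat m + 1 <= m21 M + m22 M)%Z /\ (mdet M = 1 \/ mdet M = -1)%Z /\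
  (exists j, m11 M + m21 M = 2*j+1)%Z /\ (exists j, m12 M + m22 M = 2*j+1)%Z.
Definition Idm := Mat 1 0 0 1.
Fixpoint prodm (s:nat->Z*Z) (n m:nat) : mat := match m with
  | O => Idm | S m' => mmul (prodm s n m') (Gd (s (n+m')%nat)) end.

Lemma Gd_inv d: admissible d -> Inv (Gd d) 1 /\ (1 <= m11 (Gd d) + m12 (Gd d))%Z.
Proof.
  destruct d as [a e]. unfold admissible. intros H.
  assert (H': (e = -1 /\ 2 <= a \/ e = 1 /\ 1 <= a)%Z) by lia. clear H.
  destruct H' as [[-> Ha]|[-> Ha]].
  - replace (Gd (a,-1)%Z) with (Mat (a-1) (a-2) a (a-1)) by reflexivity.
    unfold Inv, mdet; cbn [m11 m12 m21 m22]. simpl Z.of_nat.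
    repeat split; try lia. exists (a-1)%Z; lia. exists (a-2)%Z; lia.
  - replace (Gd (a,1)%Z) with (Mat (a-1) a a (a+1)) by reflexivity.
    unfold Inv, mdet; cbn [m11 m12 m21 m22]. simpl Z.of_nat.
    repeat split; try lia. exists (a-1)%Z; lia. exists a; lia.
Qed.

Lemma Inv_mul M G m: Inv M m -> Inv G 1 -> (1 <= m11 G + m12 G)%Z -> Inv (mmul M G) (S m).
Proof.
  destruct M as [a b c d], G as [a' b' c' d'].
  unfold Inv, mdet, mmul; cbn [m11 m12 m21 m22]. simpl (Z.of_nat 1).
  intros [Ha [Hb [Hc [Hd [Hs [Hdet [[j Hj] [l Hl]]]]]]]]
         [Ha' [Hb' [Hc' [Hd' [Hs' [Hdet' [[j' Hj'] [l' Hl']]]]]]]] Hab'.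
  rewrite Nat2Z.inj_succ.
  assert (P1: (0 <= a*a')%Z) by (apply Z.mul_nonneg_nonneg; lia).
  assert (P2: (0 <= b*c')%Z) by (apply Z.mul_nonneg_nonneg; lia).
  assert (P3: (0 <= a*b')%Z) by (apply Z.mul_nonneg_nonneg; lia).
  assert (P4: (0 <= b*d')%Z) by (apply Z.mul_nonneg_nonneg; lia).
  assert (P5: (0 <= c*a')%Z) by (apply Z.mul_nonneg_nonneg; lia).
  assert (P6: (0 <= d*c')%Z) by (apply Z.mul_nonneg_nonneg; lia).
  assert (P7: (0 <= c*b')%Z) by (apply Z.mul_nonneg_nonneg; lia).
  assert (P8: (0 <= (d-1)*(d'-1))%Z) by (apply Z.mul_nonneg_nonneg; lia).
  assert (P9: (0 <= c*(a'+b'-1))%Z) by (apply Z.mul_nonneg_nonneg; lia).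
  assert (P10: (0 <= (d-1)*(c'+d'-3))%Z) by (apply Z.mul_nonneg_nonneg; lia).
  split; [lia|]. split; [lia|]. split; [lia|]. split; [lia|].
  split. { lia. }
  split; [|split].
  - assert (E: ((a * a' + b * c') * (c * b' + d * d') - (a * b' + b * d') * (c * a' + d * c')
               = (a*d-b*c)*(a'*d'-b'*c'))%Z) by ring.
    rewrite E. destruct Hdet as [-> | ->]; destruct Hdet' as [-> | ->]; lia.
  - exists (j*a' + l*c' + j')%Z.
    replace a with (2*j+1-c)%Z by lia. replace b with (2*l+1-d)%Z by lia.
    replace c' with (2*j'+1-a')%Z by lia. ring.
  - exists (j*b' + l*d' + l')%Z.
    replace a with (2*j+1-c)%Z by lia. replace b with (2*l+1-d)%Z by lia.
    replace d' with (2*l'+1-b')%Z by lia. ring.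
Qed.

Lemma prod_inv s n m: (forall i, admissible (s i)) -> Inv (prodm s n m) m.
Proof.
  intros Hs. induction m as [|m IH]; simpl prodm.
  - unfold Inv, Idm, mdet; cbn [m11 m12 m21 m22]. simpl Z.of_nat.
    repeat split; try lia. exists 0%Z; lia. exists 0%Z; lia.
  - destruct (Gd_inv _ (Hs (n+m)%nat)). apply Inv_mul; auto.
Qed.

Lemma mob_mul M G t:
  (0 <= m21 M)%Z -> (1 <= m22 M)%Z -> (0 <= m11 G)%Z -> (0 <= m12 G)%Z ->
  (0 <= m21 G)%Z -> (1 <= m22 G)%Z -> 0 <= t ->
  mob (mmul M G) t = mob M (mob G t).
Proof.
  destruct M as [a b c d], G as [a' b' c' d']. cbn [m11 m12 m21 m22].
  intros Hc Hd Ha' Hb' Hc' Hd' Ht.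
  apply IZR_le in Hc, Hd, Ha', Hb', Hc', Hd'.
  unfold mob, mmul; cbn [m11 m12 m21 m22].
  set (u := (IZR a' * t + IZR b') / (IZR c' * t + IZR d')).
  assert (Hp: 0 < IZR c' * t + IZR d') by nra.
  assert (Hu: 0 <= u) by (apply rdiv; nra).
  assert (Eu: IZR a' * t + IZR b' = u * (IZR c' * t + IZR d')) by (unfold u; field; lra).
  rewrite !plus_IZR, !mult_IZR.
  replace ((IZR c * IZR a' + IZR d * IZR c') * t + (IZR c * IZR b' + IZR d * IZR d'))
    with ((IZR c * u + IZR d) * (IZR c' * t + IZR d')) by (unfold u; field; lra).
  replace ((IZR a * IZR a' + IZR b * IZR c') * t + (IZR a * IZR b' + IZR b * IZR d'))
    with ((IZR a * u + IZR b) * (IZR c' * t + IZR d')) by (unfold u; field; lra).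
  field. split; nra.
Qed.

Lemma inB_range d y: inB d y -> 0 <= y < 1.
Proof.
  destruct d as [a e]; unfold inB; cbv zeta.
  intros [[_ [Ha [H1 H2]]]|[_ [Ha [H1 H2]]]].
  - assert (HK: 1 <= IZR (a-1)) by (apply IZR_le; lia).
    apply ldiv in H1; [|lra]. apply rdiv in H2; [|lra]. split; nra.
  - assert (HK: 1 <= IZR a) by (apply IZR_le; lia).
    apply ldiv in H1; [|lra]. apply rdiv in H2; [|lra]. split; nra.
Qed.

Definition it (x:R) (n:nat) := Nat.iter n oocf_T x.

Lemma rep x s: is_oocf_expansion x s -> forall n m,
  it x n = mob (prodm s n m) (it x (n+m)) /\ 0 <= it x (n+m) <= 1.
Proof.
  intros Hx n m. induction m as [|m [IH IHr]].
  - simpl prodm. rewrite Nat.add_0_r. split.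
    + unfold mob, Idm; cbn [m11 m12 m21 m22]. field.
    + destruct (Hx n) as [_ [Hb _]]. apply inB_range in Hb. unfold it; lra.
  - destruct (Hx (n+m)%nat) as [Had [Hb _]].
    destruct (B _ _ Hb) as [Hr Hy].
    replace (n + S m)%nat with (S (n+m)) by lia.
    change (it x (S (n+m))) with (oocf_T (it x (n+m))).
    split; [|exact Hr].
    simpl prodm.
    destruct (prod_inv s n m (fun i => proj1 (Hx i))) as [_ [_ [Hc [Hd _]]]].
    destruct (Gd_inv _ Had) as [[Ha' [Hb' [Hc' [Hd' _]]]] _].
    unfold it in *. rewrite mob_mul; auto; try lra. rewrite <- Hy. exact IH.
Qed.

Lemma absdiv Y P S: 0<S -> 0<P -> Rabs Y * S <= P -> Rabs (Y/P) <= 1/S.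
Proof. intros HS HP H. unfold Rdiv. rewrite Rabs_mult, Rabs_inv, (Rabs_right P) by lra.
  apply (Rmult_le_reg_r (P*S)). nra.
  replace (Rabs Y * /P * (P*S)) with (Rabs Y * S) by (field; lra).
  replace (1 * /S * (P*S)) with P by (field; lra). auto.
Qed.

Lemma diam M m t w: Inv M m -> 0 <= t <= 1 -> 0 <= w <= 1 ->
  Rabs (mob M t - mob M w) <= 1 / IZR (m21 M + m22 M).
Proof.
  destruct M as [a b c d]. unfold Inv, mdet, mob; cbn [m11 m12 m21 m22].
  intros [Ha [Hb [Hc [Hd [Hs [Hdet _]]]]]] Ht Hw.
  apply IZR_le in Hc, Hd.
  assert (HS: 1 <= IZR (c + d)) by (apply IZR_le; lia).
  rewrite plus_IZR in *.
  assert (Pt: 0 < IZR c * t + IZR d) by nra.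
  assert (Pw: 0 < IZR c * w + IZR d) by nra.
  set (P := (IZR c * t + IZR d) * (IZR c * w + IZR d)).
  assert (HP: 0 < P) by (unfold P; nra).
  assert (E: (IZR a * t + IZR b) / (IZR c * t + IZR d) - (IZR a * w + IZR b) / (IZR c * w + IZR d)
             = IZR (a*d - b*c) * (t - w) / P).
  { unfold P. rewrite minus_IZR, !mult_IZR. field. lra. }
  rewrite E.
  assert (K1: (t - w) * (IZR c + IZR d) <= P).
  { unfold P. assert (0 <= (IZR c * t + IZR d) * (IZR c * w + IZR d - 1)) by (apply Rmult_le_pos; nra).
    assert (0 <= IZR d * (1 - t)) by (apply Rmult_le_pos; lra).
    assert (0 <= IZR c * w) by (apply Rmult_le_pos; lra).
    assert (0 <= IZR d * w) by (apply Rmult_le_pos; lra). nra. }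
  assert (K2: (w - t) * (IZR c + IZR d) <= P).
  { unfold P. assert (0 <= (IZR c * w + IZR d) * (IZR c * t + IZR d - 1)) by (apply Rmult_le_pos; nra).
    assert (0 <= IZR d * (1 - w)) by (apply Rmult_le_pos; lra).
    assert (0 <= IZR c * t) by (apply Rmult_le_pos; lra).
    assert (0 <= IZR d * t) by (apply Rmult_le_pos; lra). nra. }
  apply absdiv; [lra|lra|].
  destruct Hdet as [-> | ->];
    [replace (IZR 1 * (t-w)) with (t-w) by ring | replace (IZR (-1) * (t-w)) with (w-t) by ring];
    unfold Rabs; destruct Rcase_abs; nra.
Qed.

Lemma per_prod s N p m: (forall i, (N <= i)%nat -> s (i + p)%nat = s i) ->
  prodm s (N+p) m = prodm s N m.
Proof.
  intros Hp. induction m as [|m IH]; simpl; auto.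
  rewrite IH. replace (N + p + m)%nat with ((N+m)+p)%nat by lia. rewrite Hp by lia. reflexivity.
Qed.

Lemma small_eq e: (forall m:nat, Rabs e <= 1/(2*INR m + 1)) -> e = 0.
Proof.
  intros H. destruct (Req_dec e 0) as [|Hne]; auto. exfalso.
  assert (He: 0 < Rabs e) by (apply Rabs_pos_lt; auto).
  destruct (archimed (1/Rabs e)) as [Hu _].
  assert (Hpos: 0 < 1/Rabs e) by (apply rdivs; lra).
  assert (Hz: (0 < up (1/Rabs e))%Z) by (apply lt_IZR; lra).
  specialize (H (Z.to_nat (up (1/Rabs e)))).
  rewrite INR_IZR_INZ, Z2Nat.id in H by lia.
  apply rdiv in H; [|lra]. unfold Rgt in Hu. apply ldivs in Hu; [|lra]. nra.
Qed.

Definition nz3 (A B C:Z) := ~ (A = 0 /\ B = 0 /\ C = 0)%Z.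

Lemma quad_final x A B C: irrational x -> nz3 A B C ->
  IZR A * x^2 + IZR B * x + IZR C = 0 -> quadratic_irrational x.
Proof.
  intros Hi Hn H. split; auto.
  destruct (Z.eq_dec A 0) as [HA|HA].
  - exfalso. subst A. destruct (Z.eq_dec B 0) as [HB|HB].
    + subst B. apply Hn; repeat split; auto. apply eq_IZR. simpl in H. lra.
    + apply (Hi (-C)%Z B HB). rewrite opp_IZR. simpl in H.
      assert (IZR B <> 0) by (apply not_0_IZR; auto). field_simplify_eq; auto. lra.
  - exists A, B, C. auto.
Qed.

Lemma mob_irr Q z x: x = mob Q z -> 0 < IZR (m21 Q) * z + IZR (m22 Q) -> irrational x -> irrational z.
Proof.
  destruct Q as [a b c d]; unfold mob; cbn [m11 m12 m21 m22].
  intros Hx Hd Hi p q Hq Hz.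
  assert (Hq': IZR q <> 0) by (apply not_0_IZR; auto).
  assert (Hden: (c*p + d*q <> 0)%Z).
  { intro E. assert (IZR (c*p+d*q) = IZR q * (IZR c * z + IZR d)) by
      (rewrite Hz, plus_IZR, !mult_IZR; field; auto).
    rewrite E in H. simpl in H. nra. }
  apply (Hi (a*p + b*q)%Z (c*p+d*q)%Z Hden).
  rewrite Hx, Hz, !plus_IZR, !mult_IZR. field.
  split; auto. intro E. apply Hden. apply eq_IZR. rewrite plus_IZR, !mult_IZR. simpl. lra.
Qed.

Lemma quad_transfer Q z x A B C: x = mob Q z -> 0 < IZR (m21 Q) * z + IZR (m22 Q) ->
  mdet Q <> 0%Z -> nz3 A B C -> IZR A * z^2 + IZR B * z + IZR C = 0 ->
  exists P2 P1 P0, nz3 P2 P1 P0 /\ IZR P2 * x^2 + IZR P1 * x + IZR P0 = 0.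
Proof.
  destruct Q as [a b c d]; unfold mob, mdet; cbn [m11 m12 m21 m22].
  intros Hx Hd HD Hn Hq.
  exists (A*d*d - B*c*d + C*c*c)%Z, (-2*A*b*d + B*(a*d+b*c) - 2*C*a*c)%Z, (A*b*b - B*a*b + C*a*a)%Z.
  split.
  - intros [H2 [H1 H0]]. apply Hn.
    assert (E1: ((a*d-b*c)*(a*d-b*c)*A = (A*d*d - B*c*d + C*c*c)*a*a
       + (-2*A*b*d + B*(a*d+b*c) - 2*C*a*c)*a*c + (A*b*b - B*a*b + C*a*a)*c*c)%Z) by ring.
    assert (E2: ((a*d-b*c)*(a*d-b*c)*B = 2*(A*d*d - B*c*d + C*c*c)*a*b
       + (-2*A*b*d + B*(a*d+b*c) - 2*C*a*c)*(a*d+b*c) + 2*(A*b*b - B*a*b + C*a*a)*c*d)%Z) by ring.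
    assert (E3: ((a*d-b*c)*(a*d-b*c)*C = (A*d*d - B*c*d + C*c*c)*b*b
       + (-2*A*b*d + B*(a*d+b*c) - 2*C*a*c)*b*d + (A*b*b - B*a*b + C*a*a)*d*d)%Z) by ring.
    rewrite H2, H1, H0 in E1, E2, E3.
    assert (HD2: ((a*d-b*c)*(a*d-b*c) <> 0)%Z) by (apply Z.neq_mul_0; auto).
    repeat split; nia.
  - subst x. repeat rewrite ?plus_IZR, ?minus_IZR, ?mult_IZR, ?opp_IZR.
    set (w := IZR c * z + IZR d).
    replace (IZR A * IZR d * IZR d - IZR B * IZR c * IZR d + IZR C * IZR c * IZR c) with
      (IZR A * IZR d * IZR d - IZR B * IZR c * IZR d + IZR C * IZR c * IZR c) by reflexivity.
    transitivity (((IZR a * IZR d - IZR b * IZR c)/w)^2 * (IZR A * z^2 + IZR B * z + IZR C)).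
    + unfold w. field. lra.
    + rewrite Hq. ring.
Qed.

Lemma den_pos M m t: Inv M m -> 0 <= t -> 0 < IZR (m21 M) * t + IZR (m22 M).
Proof.
  intros [_ [_ [Hc [Hd _]]]] Ht. apply IZR_le in Hc, Hd.
  assert (0 <= IZR (m21 M) * t) by (apply Rmult_le_pos; lra). lra.
Qed.

Lemma inv_bound M m: Inv M m -> 1 / IZR (m21 M + m22 M) <= 1 / (2 * INR m + 1).
Proof.
  intros [_ [_ [_ [_ [Hs _]]]]].
  assert (H: 2 * INR m + 1 <= IZR (m21 M + m22 M)).
  { rewrite INR_IZR_INZ. replace (2 * IZR (Z.of_nat m) + 1) with (IZR (2 * Z.of_nat m + 1))
      by (rewrite plus_IZR, mult_IZR; ring). apply IZR_le; auto. }
  assert (0 <= INR m) by apply pos_INR.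
  unfold Rdiv. rewrite !Rmult_1_l. apply Rinv_le_contravar; lra.
Qed.

Lemma part1_irr x s: irrational x -> is_oocf_expansion x s -> eventually_periodic s ->
  quadratic_irrational x.
Proof.
  intros Hi Hx [N [p [Hp Hper]]].
  assert (Had: forall i, admissible (s i)) by (intro i; apply (proj1 (Hx i))).
  assert (Heq: it x N = it x (N+p)).
  { apply Rminus_diag_uniq. apply small_eq. intro m.
    destruct (rep x s Hx N m) as [E0 R0]. destruct (rep x s Hx (N+p) m) as [E1 R1].
    rewrite E0, E1, (per_prod s N p m Hper).
    eapply Rle_trans. apply diam with (m:=m); auto. apply prod_inv; auto.
    apply inv_bound. apply prod_inv; auto. }
  destruct (rep x s Hx N p) as [Ep Rp]. rewrite <- Heq in Ep, Rp.
  pose proof (prod_inv s N p Had) as HP.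
  destruct (rep x s Hx 0 N) as [EQ RQ]. simpl (0+N)%nat in EQ, RQ.
  change (it x 0) with x in EQ.
  pose proof (prod_inv s 0 N Had) as HQ.
  assert (Hz: irrational (it x N)) by (eapply mob_irr; eauto; eapply den_pos; eauto; lra).
  set (P := prodm s N p) in *. set (z := it x N) in *.
  assert (HdP := den_pos P p z HP (proj1 Rp)).
  destruct HP as [Ha [Hb [Hc [Hd [Hs [Hdet _]]]]]].
  assert (Hquad: IZR (m21 P) * z^2 + IZR (m22 P - m11 P) * z + IZR (- m12 P) = 0).
  { assert (Ez: z * (IZR (m21 P) * z + IZR (m22 P)) = IZR (m11 P) * z + IZR (m12 P)).
    { rewrite Ep at 1. unfold mob. field. lra. }
    rewrite minus_IZR, opp_IZR. nra. }
  assert (Hnz: nz3 (m21 P) (m22 P - m11 P) (- m12 P)).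
  { intros [H1 [H2 H3]]. unfold mdet in Hdet.
    assert (m11 P = m22 P) by lia. assert (m12 P = 0%Z) by lia.
    rewrite H, H0, H1 in Hdet. rewrite H1 in Hs. nia. }
  assert (HdQ: mdet (prodm s 0 N) <> 0%Z) by (destruct HQ as [_ [_ [_ [_ [_ [HdQ _]]]]]]; lia).
  destruct (quad_transfer _ _ _ _ _ _ EQ (den_pos _ _ _ HQ (proj1 Rp)) HdQ Hnz Hquad)
    as [P2 [P1 [P0 [Hn' Hq']]]].
  eapply quad_final; eauto.
Qed.

Lemma odd_contra x s p q: is_oocf_expansion x s -> x = IZR p / IZR q -> q <> 0%Z ->
  (exists i, p = 2*i+1)%Z -> (exists j, q = 2*j+1)%Z -> False.
Proof.
  intros Hx Exq Hq [i Hi] [j Hj].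
  assert (Had: forall i, admissible (s i)) by (intro k; apply (proj1 (Hx k))).
  set (m := Z.to_nat (Z.abs q)).
  destruct (rep x s Hx 0 m) as [E R]. simpl (0+m)%nat in E, R. change (it x 0) with x in E.
  pose proof (prod_inv s 0 m Had) as HM. pose proof (den_pos _ _ _ HM (proj1 R)) as Hden.
  set (t := it x m) in *. set (M := prodm s 0 m) in *.
  destruct HM as [Ha [Hb [Hc [Hd [Hs [Hdet [_ [l Hl]]]]]]]].
  set (P := (p * m22 M - q * m12 M)%Z). set (Q := (q * m11 M - p * m21 M)%Z).
  assert (Hq': IZR q <> 0) by (apply not_0_IZR; auto).
  assert (Et: IZR P = t * IZR Q).
  { assert (E2: IZR p * (IZR (m21 M) * t + IZR (m22 M)) = IZR q * (IZR (m11 M) * t + IZR (m12 M))).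
    { assert (E3: IZR p = x * IZR q) by (rewrite Exq; field; auto).
      rewrite E3, E. unfold mob. field. lra. }
    unfold P, Q. rewrite !minus_IZR, !mult_IZR. nra. }
  assert (HP: (P = 2*(i*m22 M - j*m12 M + l - m12 M) + 1)%Z).
  { unfold P. rewrite Hi, Hj. assert (E4: m22 M = (2*l+1 - m12 M)%Z) by lia. rewrite E4. ring. }
  assert (Hid: (m21 M * P + m22 M * Q = q * mdet M)%Z) by (unfold P, Q, mdet; ring).
  assert (Hm: (Z.of_nat m = Z.abs q)%Z) by (unfold m; rewrite Z2Nat.id; lia).
  destruct (Z_lt_le_dec 0 P) as [HP0|HP0].
  - assert (HQ: (0 < Q)%Z).
    { destruct (Z_lt_le_dec 0 Q) as [|HQ]; auto. exfalso.
      apply IZR_lt in HP0. apply IZR_le in HQ. rewrite Et in HP0. simpl in HP0. nra. }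
    assert (m21 M * 1 <= m21 M * P)%Z by (apply Z.mul_le_mono_nonneg_l; lia).
    assert (m22 M * 1 <= m22 M * Q)%Z by (apply Z.mul_le_mono_nonneg_l; lia).
    destruct Hdet as [Hdt|Hdt]; rewrite Hdt in Hid; lia.
  - assert (HP1: (P < 0)%Z) by lia.
    assert (HQ: (Q < 0)%Z).
    { destruct (Z_lt_le_dec Q 0) as [|HQ]; auto. exfalso.
      apply IZR_lt in HP1. apply IZR_le in HQ. rewrite Et in HP1. simpl in *. nra. }
    assert (m21 M * P <= m21 M * (-1))%Z by (apply Z.mul_le_mono_nonneg_l; lia).
    assert (m22 M * Q <= m22 M * (-1))%Z by (apply Z.mul_le_mono_nonneg_l; lia).
    destruct Hdet as [Hdt|Hdt]; rewrite Hdt in Hid; lia.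
Qed.

Lemma reduce x p q: q <> 0%Z -> x = IZR p / IZR q ->
  exists p' q', (0 < q')%Z /\ Z.gcd p' q' = 1%Z /\ x = IZR p' / IZR q'.
Proof.
  intros Hq Hx. set (g := Z.gcd p q).
  assert (Hg: (0 < g)%Z).
  { assert (0 <= g)%Z by apply Z.gcd_nonneg. assert (g <> 0)%Z by (intro E; apply Z.gcd_eq_0 in E; lia). lia. }
  assert (Ep: p = (g * (p / g))%Z) by (apply Znumtheory.Zdivide_Zdiv_eq; auto; apply Z.gcd_divide_l).
  assert (Eq: q = (g * (q / g))%Z) by (apply Znumtheory.Zdivide_Zdiv_eq; auto; apply Z.gcd_divide_r).
  assert (Hgcd: Z.gcd (p/g) (q/g) = 1%Z) by (apply Z.gcd_div_gcd; auto; lia).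
  assert (Hq0: (q / g <> 0)%Z) by (intro E; rewrite E in Eq; lia).
  assert (Hx': x = IZR (p/g) / IZR (q/g)).
  { rewrite Hx, Ep, Eq at 1. rewrite !mult_IZR. field. split; apply not_0_IZR; lia. }
  destruct (Z_lt_le_dec 0 (q/g)) as [Hpos|Hneg].
  - exists (p/g)%Z, (q/g)%Z. auto.
  - exists (-(p/g))%Z, (-(q/g))%Z. repeat split; [lia| rewrite Z.gcd_opp_l, Z.gcd_opp_r; auto|].
    rewrite Hx', !opp_IZR. field. apply not_0_IZR; lia.
Qed.

Lemma part1_rat x s: is_oocf_expansion x s -> ~ irrational x -> inf_rational x.
Proof.
  intros Hx Hn.
  assert (H: exists p q, q <> 0%Z /\ x = IZR p / IZR q).
  { apply Classical_Prop.NNPP. intro H. apply Hn. intros p q Hq E. apply H. eauto. }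
  destruct H as [p [q [Hq E]]].
  destruct (reduce x p q Hq E) as [p' [q' [Hq' [Hg E']]]].
  exists p', q'. repeat split; auto.
  intro Hpar.
  destruct (Z.odd q') eqn:Oq.
  - apply (odd_contra x s p' q' Hx E'); [lia| |]; apply Z.odd_spec; congruence.
  - assert (Ep: Z.even p' = true) by (rewrite <- Z.negb_odd; rewrite Hpar; reflexivity).
    assert (Eq: Z.even q' = true) by (rewrite <- Z.negb_odd; rewrite Oq; reflexivity).
    apply Z.even_spec in Ep, Eq. destruct Ep as [u Hu], Eq as [v Hv].
    rewrite Hu, Hv, Z.gcd_mul_mono_l in Hg. assert (0 <= Z.gcd u v)%Z by apply Z.gcd_nonneg. lia.
Qed.

Lemma part1 : forall (x : R) (s : nat -> Z * Z),
      0 <= x <= 1 -> is_oocf_expansion x s -> eventually_periodic s ->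
      inf_rational x \/ quadratic_irrational x.
Proof.
  intros x s _ Hx Hp. destruct (Classical_Prop.classic (irrational x)) as [Hi|Hi].
  - right. eapply part1_irr; eauto.
  - left. eapply part1_rat; eauto.
Qed.

Definition cA (A B C:Z) (M:mat) := (A*m11 M*m11 M + B*m11 M*m21 M + C*m21 M*m21 M)%Z.
Definition cB (A B C:Z) (M:mat) := (2*A*m11 M*m12 M + B*(m11 M*m22 M + m12 M*m21 M) + 2*C*m21 M*m22 M)%Z.
Definition cC (A B C:Z) (M:mat) := (A*m12 M*m12 M + B*m12 M*m22 M + C*m22 M*m22 M)%Z.

Lemma coef_eq M t x A B C: x = mob M t -> 0 < IZR (m21 M) * t + IZR (m22 M) ->
  IZR A * x^2 + IZR B * x + IZR C = 0 ->
  IZR (cA A B C M) * t^2 + IZR (cB A B C M) * t + IZR (cC A B C M) = 0.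
Proof.
  destruct M as [a b c d]; unfold mob, cA, cB, cC; cbn [m11 m12 m21 m22].
  intros Hx Hd Hq.
  repeat rewrite ?plus_IZR, ?minus_IZR, ?mult_IZR.
  transitivity ((IZR c * t + IZR d)^2 * (IZR A * x^2 + IZR B * x + IZR C)).
  - rewrite Hx. field. lra.
  - rewrite Hq. ring.
Qed.

Lemma coef_disc M A B C: mdet M = 1%Z \/ mdet M = (-1)%Z ->
  (cB A B C M * cB A B C M - 4 * cA A B C M * cC A B C M = B*B - 4*A*C)%Z.
Proof.
  destruct M as [a b c d]; unfold mdet, cA, cB, cC; cbn [m11 m12 m21 m22]. intros H.
  transitivity ((a*d-b*c)*(a*d-b*c)*(B*B-4*A*C))%Z; [ring|].
  destruct H as [-> | ->]; ring.
Qed.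

Lemma coef_bound M m t x A B C: Inv M m -> 0 <= t <= 1 -> x = mob M t -> A <> 0%Z ->
  IZR A * x^2 + IZR B * x + IZR C = 0 ->
  let xp := - IZR B / IZR A - x in
  Rabs (IZR (cC A B C M)) <= Rabs (IZR A) * (1 + 3 * Rabs (x - xp)) /\
  (1/3 <= t -> Rabs (IZR (cA A B C M)) <= Rabs (IZR A) * (1 + 3 * Rabs (x - xp))).
Proof.
  intros HM Ht Hx HA Hq xp.
  pose proof (den_pos _ _ _ HM (proj1 Ht)) as Hw.
  destruct M as [a b c d]. unfold Inv, mdet, mob, cA, cC in *; cbn [m11 m12 m21 m22] in *.
  destruct HM as [Ha [Hb [Hc [Hd [_ [Hdet _]]]]]].
  apply IZR_le in Ha, Hb, Hc, Hd.
  assert (HA': IZR A <> 0) by (apply not_0_IZR; auto).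
  set (w := IZR c * t + IZR d) in *.
  set (D := IZR a * IZR d - IZR b * IZR c).
  assert (HD: D = 1 \/ D = -1).
  { unfold D. rewrite <- !mult_IZR, <- minus_IZR. destruct Hdet as [-> | ->]; auto. }
  assert (HC: IZR C = - IZR A * x^2 - IZR B * x) by lra.
  set (dl := x - xp).
  assert (F: forall u v, IZR A * u * u + IZR B * u * v + IZR C * v * v
             = IZR A * ((u - v*x) * (u - v*x) + (v * (u - v*x)) * dl)).
  { intros u v. unfold dl, xp. rewrite HC. field. auto. }
  assert (Hw1: 1 <= w) by (unfold w; assert (0 <= IZR c * t) by (apply Rmult_le_pos; lra); lra).
  assert (HA0: 0 <= Rabs (IZR A)) by apply Rabs_pos.
  assert (Gen: forall e v, e * e <= 1 -> Rabs (v * e) <= 3 ->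
     Rabs (IZR A * (e * e + v * e * dl)) <= Rabs (IZR A) * (1 + 3 * Rabs dl)).
  { intros e v H1 H2. rewrite Rabs_mult. apply Rmult_le_compat_l; auto.
    eapply Rle_trans; [apply Rabs_triang|].
    rewrite (Rabs_pos_eq (e*e)) by nra. rewrite Rabs_mult.
    assert (0 <= Rabs dl) by apply Rabs_pos. nra. }
  split.
  - rewrite !plus_IZR, !mult_IZR, F.
    assert (Ef: IZR b - IZR d * x = - D * t / w) by (rewrite Hx; unfold D, w in *; field; lra).
    rewrite Ef. apply Gen.
    + replace (- D * t / w * (- D * t / w)) with ((D*D) * (t*t) / (w*w)) by (field; lra).
      apply ldiv; [nra|]. destruct HD as [-> | ->]; nra.
    + replace (IZR d * (- D * t / w)) with (- D * (IZR d * t / w)) by (field; lra).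
      rewrite Rabs_mult. replace (Rabs (-D)) with 1 by (destruct HD as [-> | ->]; unfold Rabs; destruct Rcase_abs; lra).
      rewrite Rmult_1_l. rewrite Rabs_pos_eq by (apply rdiv; nra).
      apply ldiv; [lra|]. unfold w. assert (0 <= IZR c * t) by (apply Rmult_le_pos; lra). assert (IZR d * t <= IZR d) by nra. lra.
  - intros Ht3. rewrite !plus_IZR, !mult_IZR.
    replace (IZR A * IZR a * IZR a + IZR B * IZR a * IZR c + IZR C * IZR c * IZR c)
      with (IZR A * IZR a * IZR a + IZR B * IZR a * IZR c + IZR C * IZR c * IZR c) by reflexivity.
    rewrite F.
    assert (Ee: IZR a - IZR c * x = D / w) by (rewrite Hx; unfold D, w in *; field; lra).
    rewrite Ee. apply Gen.
    + replace (D / w * (D / w)) with ((D*D) / (w*w)) by (field; lra).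
      apply ldiv; [nra|]. destruct HD as [-> | ->]; nra.
    + replace (IZR c * (D / w)) with (D * (IZR c / w)) by (field; lra).
      rewrite Rabs_mult. replace (Rabs D) with 1 by (destruct HD as [-> | ->]; unfold Rabs; destruct Rcase_abs; lra).
      rewrite Rmult_1_l. rewrite Rabs_pos_eq by (apply rdiv; nra).
      apply ldiv; [lra|]. unfold w. nra.
Qed.

Lemma disc_nz x A B C: irrational x -> A <> 0%Z -> IZR A * x^2 + IZR B * x + IZR C = 0 ->
  (B*B - 4*A*C <> 0)%Z.
Proof.
  intros Hi HA Hq HD.
  assert (H: (2 * IZR A * x + IZR B)^2 = 0).
  { transitivity (4 * IZR A * (IZR A * x^2 + IZR B * x + IZR C) + IZR (B*B - 4*A*C)).
    - rewrite minus_IZR, !mult_IZR. simpl. ring.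
    - rewrite Hq, HD. simpl. ring. }
  assert (H2: 2 * IZR A * x + IZR B = 0) by (apply Classical_Prop.NNPP; intro Hne; apply (pow_nonzero _ 2 Hne); auto).
  apply (Hi (- B)%Z (2*A)%Z ltac:(lia)). rewrite opp_IZR, mult_IZR.
  assert (IZR A <> 0) by (apply not_0_IZR; auto). field_simplify_eq; auto. simpl. lra.
Qed.

Lemma small_digit d y: inB d y -> y < 1/3 -> d = (2%Z, (-1)%Z).
Proof.
  destruct d as [a e]; unfold inB; cbv zeta.
  intros [[He [Ha [H1 H2]]]|[He [Ha [H1 H2]]]] Hy; subst e.
  - assert (HK: 1 <= IZR (a-1)) by (apply IZR_le; lia).
    apply ldiv in H1; [|lra].
    destruct (Z.eq_dec a 2) as [->|Hn]; auto. exfalso.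
    assert (HK2: 2 <= IZR (a-1)) by (apply IZR_le; lia). nra.
  - assert (HK: 1 <= IZR a) by (apply IZR_le; lia).
    apply ldiv in H1; [|lra]. exfalso. nra.
Qed.

Lemma irr_all x s: irrational x -> is_oocf_expansion x s -> forall n, irrational (it x n).
Proof.
  intros Hi Hx n.
  assert (Had: forall i, admissible (s i)) by (intro k; apply (proj1 (Hx k))).
  destruct (rep x s Hx 0 n) as [E R]. simpl (0+n)%nat in E, R. change (it x 0) with x in E.
  eapply mob_irr; eauto. eapply den_pos; [apply prod_inv; auto|lra].
Qed.

Lemma irr_pos y: irrational y -> 0 <= y -> 0 < y.
Proof. intros Hi H. destruct (Req_dec y 0) as [E|E]; [|lra].
  exfalso. apply (Hi 0%Z 1%Z ltac:(lia)). rewrite E. simpl. field. Qed.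

Lemma good_inf x s: is_oocf_expansion x s -> (forall n, irrational (it x n)) ->
  forall N, exists n, (N <= n)%nat /\ 1/3 <= it x n.
Proof.
  intros Hx Hi N. apply Classical_Prop.NNPP. intro Hn.
  assert (Hs: forall n, (N <= n)%nat -> it x n < 1/3).
  { intros n Hn'. destruct (Rlt_le_dec (it x n) (1/3)); auto. exfalso. apply Hn. eauto. }
  assert (Hp: forall n, 0 < it x n).
  { intro n. apply irr_pos; auto. destruct (Hx n) as [_ [Hb _]]. apply inB_range in Hb. exact (proj1 Hb). }
  assert (Step: forall n, (N <= n)%nat -> 1 / it x n = 2 + 1 / it x (S n)).
  { intros n Hn'. destruct (Hx n) as [_ [Hb _]].
    pose proof (small_digit _ _ Hb (Hs n Hn')) as Hd. rewrite Hd in Hb.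
    destruct (B _ _ Hb) as [_ Hy].
    replace (Gd (2%Z, (-1)%Z)) with (Mat 1 0 2 1) in Hy by reflexivity.
    unfold mob in Hy; cbn [m11 m12 m21 m22] in Hy.
    change (it x (S n)) with (oocf_T (it x n)).
    pose proof (Hp (S n)) as HS. change (it x (S n)) with (oocf_T (it x n)) in HS.
    unfold it in *. rewrite Hy at 1. field. split; lra. }
  assert (Ind: forall j, 1 / it x (N + j) = 1 / it x N - 2 * INR j).
  { induction j as [|j IH].
    - rewrite Nat.add_0_r. simpl. ring.
    - rewrite S_INR. replace (N + S j)%nat with (S (N+j)) by lia.
      rewrite Step in IH by lia. lra. }
  set (u := 1 / it x N).
  destruct (archimed u) as [Hu _].
  assert (Hu0: 0 < u) by (unfold u; apply rdivs; [apply Hp|lra]).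
  assert (Hz: (0 < up u)%Z) by (apply lt_IZR; lra).
  specialize (Ind (Z.to_nat (up u))). fold u in Ind.
  rewrite INR_IZR_INZ, Z2Nat.id in Ind by lia.
  assert (0 < 1 / it x (N + Z.to_nat (up u))) by (apply rdivs; [apply Hp|lra]).
  lra.
Qed.

Lemma PH (X:Type) (l':list X) (f:nat -> X): (forall i, In (f i) l') ->
  exists i j, (i < j)%nat /\ f i = f j.
Proof.
  intros Hin. apply Classical_Prop.NNPP. intro H.
  assert (Inj: Injective f).
  { intros i j E. destruct (Nat.lt_trichotomy i j) as [L|[L|L]]; auto; exfalso; apply H; eauto. }
  assert (ND: NoDup (map f (seq 0 (S (length l'))))) by (apply Injective_map_NoDup; auto; apply seq_NoDup).
  assert (Inc: incl (map f (seq 0 (S (length l')))) l').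
  { intros y Hy. apply in_map_iff in Hy. destruct Hy as [i [<- _]]. auto. }
  pose proof (NoDup_incl_length ND Inc) as L. rewrite length_map, length_seq in L. lia.
Qed.

Definition boxZ (K:Z) : list Z := map (fun i => (Z.of_nat i - K)%Z) (seq 0 (Z.to_nat (2*K+1))).
Lemma in_boxZ K z: (Z.abs z <= K)%Z -> In z (boxZ K).
Proof.
  intros H. unfold boxZ. apply in_map_iff. exists (Z.to_nat (z + K)). split.
  - rewrite Z2Nat.id by lia. ring.
  - apply in_seq. lia.
Qed.

Lemma roots_eq (A B C r s: R): A <> 0 -> A*r^2 + B*r + C = 0 -> A*s^2 + B*s + C = 0 ->
  (r < -B/(2*A) <-> s < -B/(2*A)) -> r = s.
Proof.
  intros HA Hr Hs Hside.
  assert (E: (r - s) * (A*(r+s) + B) = 0) by nra.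
  apply Rmult_integral in E. destruct E as [E|E]; [lra|].
  assert (Hv: r + s = 2 * (-B/(2*A))) by (field_simplify_eq; auto; lra).
  set (v := -B/(2*A)) in *.
  destruct (Rlt_le_dec r v) as [H1|H1].
  - assert (s < v) by (apply Hside; auto). lra.
  - destruct (Rlt_le_dec s v) as [H2|H2].
    + assert (r < v) by (apply Hside; auto). lra.
    + lra.
Qed.

Lemma part2a x: 0 < x < 1 -> irrational x -> exists s, is_oocf_expansion x s.
Proof.
  intros Hx Hi. exists (fun n => digit (it x n)).
  assert (P: forall n, 0 < it x n < 1 /\ irrational (it x n)).
  { induction n as [|n [Hr Hirr]]; [split; auto|].
    destruct (digit_ok _ Hr) as [Had Hb].
    destruct (B _ _ Hb) as [Hr' Hy].
    change (it x (S n)) with (oocf_T (it x n)).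
    destruct (Gd_inv _ Had) as [HG _].
    assert (Hi': irrational (oocf_T (it x n))).
    { eapply mob_irr; eauto. eapply den_pos; eauto. lra. }
    split; auto.
    assert (oocf_T (it x n) <> 0) by (intro E; apply (Hi' 0%Z 1%Z ltac:(lia)); rewrite E; simpl; field).
    assert (oocf_T (it x n) <> 1) by (intro E; apply (Hi' 1%Z 1%Z ltac:(lia)); rewrite E; simpl; field).
    lra. }
  intro n. destruct (P n) as [Hr _]. destruct (digit_ok _ Hr) as [Had Hb].
  split; auto. split; auto. unfold it in Hr. lra.
Qed.

Lemma abs_le_sq b: (Z.abs b <= b*b)%Z.
Proof. destruct (Z.abs_spec b) as [[H1 H2]|[H1 H2]]; rewrite H2; nia. Qed.

Lemma part2b x s: 0 < x < 1 -> quadratic_irrational x -> is_oocf_expansion x s ->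
  eventually_periodic s.
Proof.
  intros Hx [Hi [A [B [C [HA Hq]]]]] Hs.
  assert (Had: forall i, admissible (s i)) by (intro k; apply (proj1 (Hs k))).
  pose proof (irr_all x s Hi Hs) as Hirr.
  assert (Hdig: forall n, s n = digit (it x n)).
  { intro n. apply U; auto. apply (Hs n). }
  set (xp := - IZR B / IZR A - x).
  set (Kr := Rabs (IZR A) * (1 + 3 * Rabs (x - xp))).
  set (K := up Kr).
  assert (HK: Kr < IZR K) by (apply (proj1 (archimed Kr))).
  set (D := (B*B - 4*A*C)%Z).
  set (Kt := (K + (Z.abs D + 4*K*K))%Z).
  set (An := fun n => cA A B C (prodm s 0 n)).
  set (Bn := fun n => cB A B C (prodm s 0 n)).
  set (Cn := fun n => cC A B C (prodm s 0 n)).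
  assert (Facts: forall n, 1/3 <= it x n ->
    (Z.abs (An n) <= Kt)%Z /\ (Z.abs (Bn n) <= Kt)%Z /\ (Z.abs (Cn n) <= Kt)%Z /\ An n <> 0%Z /\
    IZR (An n) * (it x n)^2 + IZR (Bn n) * it x n + IZR (Cn n) = 0).
  { intros n Hn.
    destruct (rep x s Hs 0 n) as [E R]. simpl (0+n)%nat in E, R. change (it x 0) with x in E.
    pose proof (prod_inv s 0 n Had) as HM.
    destruct (coef_bound _ _ _ _ _ _ _ HM R E HA Hq) as [BC BA]. specialize (BA Hn).
    fold xp Kr in BA, BC.
    assert (Heq := coef_eq _ _ _ _ _ _ E (den_pos _ _ _ HM (proj1 R)) Hq).
    assert (Hdisc := coef_disc (prodm s 0 n) A B C (proj1 (proj2 (proj2 (proj2 (proj2 (proj2 HM))))))).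
    fold (An n) (Bn n) (Cn n) in BA, BC, Heq, Hdisc.
    assert (KA: (Z.abs (An n) <= K)%Z).
    { rewrite <- abs_IZR in BA. assert (IZR (Z.abs (An n)) < IZR K) by lra. apply lt_IZR in H. lia. }
    assert (KC: (Z.abs (Cn n) <= K)%Z).
    { rewrite <- abs_IZR in BC. assert (IZR (Z.abs (Cn n)) < IZR K) by lra. apply lt_IZR in H. lia. }
    assert (K0: (0 <= K)%Z) by lia.
    assert (KAC: (Z.abs (An n * Cn n) <= K*K)%Z).
    { rewrite Z.abs_mul. apply Z.mul_le_mono_nonneg; lia. }
    assert (KB: (Z.abs (Bn n) <= Z.abs D + 4*K*K)%Z).
    { pose proof (abs_le_sq (Bn n)). fold D in Hdisc. lia. }
    assert (D0: D <> 0%Z) by (apply (disc_nz x); auto).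
    assert (HAn: An n <> 0%Z).
    { intro E0. rewrite E0 in Heq, Hdisc. simpl in Heq.
      destruct (Z.eq_dec (Bn n) 0) as [E1|E1].
      - rewrite E1 in Hdisc. fold D in Hdisc. lia.
      - apply (Hirr n (- Cn n)%Z (Bn n) E1). rewrite opp_IZR.
        assert (IZR (Bn n) <> 0) by (apply not_0_IZR; auto). field_simplify_eq; auto. lra. }
    repeat split; auto; lia. }
  assert (Hg: forall N, {n | (N <= n)%nat /\ 1/3 <= it x n}).
  { intro N. apply ClassicalEpsilon.constructive_indefinite_description. apply (good_inf x s Hs Hirr). }
  pose (nxt := fun N => proj1_sig (Hg N)).
  pose (g := fix g i := match i with O => nxt O | S i' => nxt (S (g i')) end).
  assert (Ggood: forall i, 1/3 <= it x (g i)).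
  { intros [|i]; simpl; unfold nxt; apply (proj2_sig (Hg _)). }
  assert (Ginc: forall i, (g i < g (S i))%nat).
  { intro i. simpl. unfold nxt. destruct (proj2_sig (Hg (S (g i)))). lia. }
  assert (Gmono: forall i j, (i < j)%nat -> (g i < g j)%nat).
  { intros i j Hij. induction Hij; [apply Ginc|]. pose proof (Ginc m). lia. }
  pose (side := fun n => if Rlt_dec (it x n) (- IZR (Bn n) / (2 * IZR (An n))) then true else false).
  pose (code := fun n => (An n, Bn n, Cn n, side n)).
  destruct (PH _ (list_prod (list_prod (list_prod (boxZ Kt) (boxZ Kt)) (boxZ Kt)) (true::false::nil))
                (fun i => code (g i))) as [i [j [Hij Hc]]].
  { intro i. destruct (Facts (g i) (Ggood i)) as [F1 [F2 [F3 _]]].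
    unfold code. repeat (apply in_prod_iff; split); try (apply in_boxZ; auto).
    destruct (side (g i)); simpl; auto. }
  set (n := g i) in *. set (m := g j) in *.
  assert (Hnm: (n < m)%nat) by (apply Gmono; auto).
  unfold code in Hc. injection Hc as E1 E2 E3 E4.
  destruct (Facts n (Ggood i)) as [_ [_ [_ [HAn Qn]]]].
  destruct (Facts m (Ggood j)) as [_ [_ [_ [_ Qm]]]].
  rewrite <- E1, <- E2, <- E3 in Qm.
  assert (Ht: it x n = it x m).
  { apply (roots_eq (IZR (An n)) (IZR (Bn n)) (IZR (Cn n))); auto.
    - apply not_0_IZR; auto.
    - unfold side in E4. rewrite <- E1, <- E2 in E4.
      destruct (Rlt_dec (it x n) _), (Rlt_dec (it x m) _); try discriminate; split; intro; auto; contradiction. }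
  exists n, (m - n)%nat. split; [lia|].
  intros k Hk.
  rewrite !Hdig. f_equal.
  replace (k + (m - n))%nat with ((k - n) + m)%nat by lia.
  replace k with ((k - n) + n)%nat at 2 by lia.
  unfold it. rewrite !Nat.iter_add. fold (it x m) (it x n). rewrite Ht. reflexivity.
Qed.

Theorem theorem1p2 :
  (forall (x : R) (s : nat -> Z * Z),
      0 <= x <= 1 -> is_oocf_expansion x s -> eventually_periodic s ->
      inf_rational x \/ quadratic_irrational x)
  /\
  (forall x : R, 0 < x < 1 -> quadratic_irrational x ->
      (exists s : nat -> Z * Z, is_oocf_expansion x s) /\
      (forall s : nat -> Z * Z, is_oocf_expansion x s -> eventually_periodic s)).
Proof.
  split.
  - exact part1.
  - intros x Hx Hq. split.
    + apply part2a; auto. apply (proj1 Hq).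
    + intros s Hs. apply (part2b x s); auto.
Qed.
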